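(* For every $n\ge1$ and every decoration $\delta\in\{\text{none},\text{down},\text{up},\text{updown}\}^n$, the $\delta$-permutree congruence $\equiv_\delta$ is a lattice congruence of the right weak order on $\mathfrak S_n$: if $\sigma\equiv_\delta\sigma'$ and $\tau\equiv_\delta\tau'$ then $\sigma\wedge\tau\equiv_\delta\sigma'\wedge\tau'$ and $\sigma\vee\tau\equiv_\delta\sigma'\vee\tau'$.
   Context: Permutations of $[n]$ are written as words $\sigma(1)\cdots\sigma(n)$. Right weak order: $\sigma\le\tau$ iff the value-inversion set $\{(a,b):a<b,\ \sigma^{-1}(b)<\sigma^{-1}(a)\}$ of $\sigma$ is contained in that of $\tau$; it is a lattice with meet $\wedge$ and join $\vee$. A decoration is a word $\delta=\delta_1\cdots\delta_n$ over $\{\text{none},\text{down},\text{up},\text{updown}\}$; call $b$ down-decorated if $\delta_b\in\{\text{down},\text{updown}\}$ and up-decorated if $\delta_b\in\{\text{up},\text{updown}\}$. The $\delta$-permutree congruence $\equiv_\delta$ is the equivalence relation on $\mathfrak S_n$ generated by the rewriting rules $U\,ac\,V\,b\,W\equiv U\,ca\,V\,b\,W$ whenever $a<b<c$ and $b$ is down-decorated, and $U\,b\,V\,ac\,W\equiv U\,b\,V\,ca\,W$ whenever $a<b<c$ and $b$ is up-decorated (here $U,V,W$ are words and $ac$ are adjacent letters). *)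

(* Defs.v *)
From mathcomp Require Import all_boot all_fingroup.
From Stdlib Require Import Relation_Operators.
Set Implicit Arguments. Unset Strict Implicit. Unset Printing Implicit Defensive.

(* Permutations of [n] are elements of 'S_n = {perm 'I_n}; the value k+1 of the
   paper is the ordinal k, and position i+1 of the word s(1)...s(n) is the
   ordinal i, so the letter at position i is [s i]. *)

Inductive deco := Dnone | Ddown | Dup | Dupdown.

Definition down_dec (d : deco) : bool :=
  match d with Ddown | Dupdown => true | _ => false end.
Definition up_dec (d : deco) : bool :=
  match d with Dup | Dupdown => true | _ => false end.

Definition weak_le n (s t : 'S_n) : bool :=
  [forall a : 'I_n, forall b : 'I_n,
     ((a < b) && ((s^-1)%g b < (s^-1)%g a)) ==> ((t^-1)%g b < (t^-1)%g a)].

Definition is_meet n (s t m : 'S_n) : bool :=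
  [&& weak_le m s, weak_le m t &
      [forall u : 'S_n, (weak_le u s && weak_le u t) ==> weak_le u m]].
Definition is_join n (s t j : 'S_n) : bool :=
  [&& weak_le s j, weak_le t j &
      [forall u : 'S_n, (weak_le s u && weak_le t u) ==> weak_le j u]].

Definition wmeet n (s t : 'S_n) : 'S_n := odflt s [pick m | is_meet s t m].
Definition wjoin n (s t : 'S_n) : 'S_n := odflt s [pick j | is_join s t j].

Definition permutree_step n (delta : 'I_n -> deco) (s t : 'S_n) : Prop :=
  exists (i i' : 'I_n), val i' = (val i).+1 /\
    (forall j, t j = s (tperm i i' j)) /\
    exists b : 'I_n,
      minn (s i) (s i') < b < maxn (s i) (s i') /\
      ((down_dec (delta b) /\ i' < (s^-1)%g b) \/
       (up_dec (delta b) /\ (s^-1)%g b < i)).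

Definition permutree_cong n (delta : 'I_n -> deco) : 'S_n -> 'S_n -> Prop :=
  clos_refl_sym_trans 'S_n (permutree_step delta).

(* Main.v *)
Require Import Defs.
From mathcomp Require Import all_boot all_fingroup.
From Stdlib Require Import Relation_Operators.
From mathcomp Require Import zify.
Set Implicit Arguments. Unset Strict Implicit. Unset Printing Implicit Defensive.

Definition before n (s : 'S_n) (x y : 'I_n) : bool := (s^-1)%g x < (s^-1)%g y.
Definition ltv (r : bool) n (x y : 'I_n) : bool := if r then y < x else x < y.

Lemma ord_neq n (x y : 'I_n) : x != y -> (x : nat) <> y.
Proof. by move=> /eqP H E; apply: H; apply: val_inj. Qed.

Lemma ltv_irr r n (x : 'I_n) : ltv r x x = false.
Proof. by rewrite /ltv; case: r; rewrite ltnn. Qed.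
Lemma ltv_trans r n (x y z : 'I_n) : ltv r x y -> ltv r y z -> ltv r x z.
Proof. rewrite /ltv; case: r; lia. Qed.
Lemma ltv_total r n (x y : 'I_n) : x != y -> ltv r x y || ltv r y x.
Proof. move/ord_neq; rewrite /ltv; case: r; lia. Qed.
Lemma ltv_asym r n (x y : 'I_n) : ltv r x y -> ltv r y x = false.
Proof. rewrite /ltv; case: r; lia. Qed.
Lemma ltv_neq r n (x y : 'I_n) : ltv r x y -> x != y.
Proof. by move=> H; apply/eqP=> E; rewrite E ltv_irr in H. Qed.

Lemma before_irr n (s : 'S_n) x : before s x x = false.
Proof. by rewrite /before ltnn. Qed.
Lemma before_trans n (s : 'S_n) x y z : before s x y -> before s y z -> before s x z.
Proof. rewrite /before; lia. Qed.
Lemma before_asym n (s : 'S_n) x y : before s x y -> before s y x = false.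
Proof. rewrite /before; lia. Qed.
Lemma before_total n (s : 'S_n) x y : x != y -> before s x y || before s y x.
Proof.
move=> H; rewrite /before.
have : (s^-1)%g x != (s^-1)%g y by apply: contra H => /eqP /perm_inj ->.
move/ord_neq; lia.
Qed.
Lemma before_neg n (s : 'S_n) x y : x != y -> before s x y = ~~ before s y x.
Proof.
move=> H; have := before_total s H; case E: (before s x y) => /=.
  by rewrite before_asym.
by move=> ->.
Qed.

Lemma card_ltk n (k : nat) : k <= n -> #|[pred i : 'I_n | i < k]| = k.
Proof.
move=> Hk; rewrite cardE /enum_mem size_filter -enumT.
rewrite -(count_map val (fun m => m < k)) val_enum_ord.
elim: n Hk => [|n IH] Hk; first by case: k Hk.
rewrite -addn1 iotaD count_cat /= add0n addn0.
case: (ltnP n k) => H.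
  have -> : k = n.+1 by lia.
  rewrite (_ : count _ _ = n) ?addn1 //.
  rewrite (@eq_in_count _ _ predT) ?count_predT ?size_iota //.
  by move=> x; rewrite mem_iota /=; lia.
idtac.
by rewrite IH // addn0.
Qed.

Lemma perm_card n (p : 'S_n) x : #|[pred y | p y < p x]| = p x.
Proof.
have H := @card_ltk n (p x) (ltnW (ltn_ord _)).
rewrite -[in RHS]H -(card_image (@perm_inj _ p)).
apply: eq_card => i; rewrite -{1}(permKV p i) mem_image ?inE ?permKV //.
exact: perm_inj.
Qed.

Lemma before_inj n (s t : 'S_n) : (forall x y, before s x y = before t x y) -> s = t.
Proof.
move=> H; apply: invg_inj; apply/permP => x; apply: ord_inj.
rewrite -(perm_card (s^-1)%g x) -(perm_card (t^-1)%g x).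
by apply: eq_card => y; rewrite !inE; exact: H.
Qed.

Lemma exists_perm_of n (R : rel 'I_n) :
  irreflexive R -> transitive R -> (forall x y, x != y -> R x y || R y x) ->
  exists u : 'S_n, forall x y, before u x y = R x y.
Proof.
move=> Hirr Htr Htot.
pose c x := #|[pred y | R y x]|.
have cmono x y : R x y -> c x < c y.
  move=> Rxy; apply: proper_card; apply/properP; split.
    by apply/subsetP => z; rewrite !inE => Rzx; exact: Htr Rzx Rxy.
  by exists x; rewrite !inE ?Hirr.
have clt x : c x < n.
  rewrite -[X in _ < X]card_ord; apply: proper_card; apply/properP; split.
    by apply/subsetP.
  by exists x; rewrite !inE ?Hirr.
pose f x := Ordinal (clt x).
have finj : injective f.
  move=> x y E; apply/eqP; apply/negPn/negP => /Htot /orP [] /cmono;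
  by move: E => /(congr1 val) /= ->; rewrite ltnn.
exists (perm finj)^-1%g => x y; rewrite /before invgK !permE /=.
case: (eqVneq x y) => [->|Hxy]; first by rewrite ltnn Hirr.
case E: (R x y); first by rewrite cmono.
case/orP: (Htot _ _ Hxy) => H; first by rewrite H in E.
by apply/negbTE; rewrite -leqNgt ltnW // cmono.
Qed.

Definition precg r n (e : rel 'I_n) : rel 'I_n := fun x y =>
  (ltv r x y && ~~ connect e y x) || (ltv r y x && connect e x y).

Definition desc r n (e : rel 'I_n) := forall y x, e y x -> ltv r x y.
Definition ecotr r n (e : rel 'I_n) :=
  forall w y z, e z w -> ltv r w y -> ltv r y z -> e z y || e y w.

Lemma J_desc r n (e : rel 'I_n) : desc r e -> forall y x, connect e y x -> y = x \/ ltv r x y.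
Proof.
move=> D y x /connectP [p]; elim: p y => [|w p IH] y /=; first by move=> _ ->; left.
case/andP=> eyw pw Ex; case: (IH w pw Ex) => [<-|H]; right; first exact: D.
exact: ltv_trans H (D _ _ eyw).
Qed.

Lemma J_cotr r n (e : rel 'I_n) : ecotr r e ->
  forall x y z, ltv r x y -> ltv r y z -> connect e z x -> connect e z y || connect e y x.
Proof.
move=> C x y z xy yz /connectP [p]; elim: p z yz => [|w p IH] z yz /=.
  by move=> _ E; rewrite -E in yz; have := ltv_trans xy yz; rewrite ltv_irr.
case/andP=> ezw pw Ex.
have Jwx : connect e w x by apply/connectP; exists p.
case: (eqVneq w y) => [Ewy|Nwy].
  by rewrite -Ewy connect1.
case/orP: (ltv_total r Nwy) => H.
  case/orP: (C w y z ezw H yz) => H2; first by rewrite connect1.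
  by rewrite (connect_trans (connect1 H2) Jwx) orbT.
case/orP: (IH w H pw Ex) => H2; last by rewrite H2 orbT.
by rewrite (connect_trans (connect1 ezw) H2).
Qed.

Lemma J_below n (e : rel 'I_n) (v : 'S_n) : (forall y x, e y x -> before v y x) ->
  forall y x, connect e y x -> y = x \/ before v y x.
Proof.
move=> B y x /connectP [p]; elim: p y => [|w p IH] y /=; first by move=> _ ->; left.
case/andP=> eyw pw Ex; case: (IH w pw Ex) => [<-|H]; right; first exact: B.
exact: before_trans (B _ _ eyw) H.
Qed.

Lemma precg_irr r n (e : rel 'I_n) : irreflexive (precg r e).
Proof. by move=> x; rewrite /precg ltv_irr. Qed.

Lemma precg_total r n (e : rel 'I_n) x y : x != y -> precg r e x y || precg r e y x.
Proof.
move=> Nxy; rewrite /precg; case/orP: (ltv_total r Nxy) => H;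
  rewrite H (ltv_asym H) /=; by case: (connect e _ _).
Qed.

Lemma precg_trans r n (e : rel 'I_n) : ecotr r e -> transitive (precg r e).
Proof.
move=> C y x z /orP [/andP [xy nJyx] | /andP [yx Jxy]]
              /orP [/andP [yz nJzy] | /andP [zy Jyz]].
- apply/orP; left; rewrite (ltv_trans xy yz) /=; apply/negP => Jzx.
  by have := J_cotr C xy yz Jzx; rewrite (negbTE nJzy) (negbTE nJyx).
- case: (eqVneq x z) => [Exz|Nxz]; first by rewrite -Exz in Jyz; rewrite Jyz in nJyx.
  case/orP: (ltv_total r Nxz) => H.
    apply/orP; left; rewrite H /=; apply/negP => Jzx.
    by rewrite (connect_trans Jyz Jzx) in nJyx.
  apply/orP; right; rewrite H /=.
  by have := J_cotr C H xy Jyz; rewrite (negbTE nJyx).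
- case: (eqVneq x z) => [Exz|Nxz]; first by rewrite Exz in Jxy; rewrite Jxy in nJzy.
  case/orP: (ltv_total r Nxz) => H.
    apply/orP; left; rewrite H /=; apply/negP => Jzx.
    by rewrite (connect_trans Jzx Jxy) in nJzy.
  apply/orP; right; rewrite H /=.
  by have := J_cotr C yz H Jxy; rewrite (negbTE nJzy) orbF.
- apply/orP; right; rewrite (ltv_trans zy yx) /=; exact: connect_trans Jxy Jyz.
Qed.

Definition E r n (s t : 'S_n) : rel 'I_n := fun y x => ltv r x y && (before s y x || before t y x).
Definition prec r n (s t : 'S_n) := precg r (E r s t).

Lemma E_desc r n (s t : 'S_n) : desc r (E r s t).
Proof. by move=> y x /andP []. Qed.

Lemma E_cotr r n (s t : 'S_n) : ecotr r (E r s t).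
Proof.
have aux (w : 'S_n) z x y : ltv r x y -> ltv r y z -> before w z x ->
    (ltv r y z && before w z y) || (ltv r x y && before w y x).
  move=> xy yz bzx; rewrite xy yz /=.
  case: (eqVneq z y) => [E1|N]; first by rewrite E1 ltv_irr in yz.
  case/orP: (before_total w N) => H; first by rewrite H.
  by rewrite (before_trans H bzx) orbT.
move=> w y z /andP [wz /orP [bs|bt]] wy yz; rewrite /E.
  by case/orP: (aux _ _ _ _ wy yz bs) => /andP [-> ->]; rewrite ?orbT.
by case/orP: (aux _ _ _ _ wy yz bt) => /andP [-> ->]; rewrite ?orbT.
Qed.

Lemma join_exists r n (s t : 'S_n) : exists u : 'S_n, forall x y, before u x y = prec r s t x y.
Proof.
apply: exists_perm_of; [exact: precg_irr | by rewrite /prec; apply: precg_trans; apply: E_cotr | exact: precg_total].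
Qed.

Definition wle r n (s t : 'S_n) := forall x y, ltv r x y -> before s y x -> before t y x.

Lemma join_spec r n (s t u : 'S_n) : (forall x y, before u x y = prec r s t x y) ->
  [/\ wle r s u, wle r t u & forall v, wle r s v -> wle r t v -> wle r u v].
Proof.
move=> H; split.
- move=> x y xy b; rewrite H /prec /precg (ltv_asym xy) xy /=.
  by apply: connect1; rewrite /E xy b.
- move=> x y xy b; rewrite H /prec /precg (ltv_asym xy) xy /=.
  by apply: connect1; rewrite /E xy b orbT.
move=> v Hs Ht x y xy; rewrite H /prec /precg (ltv_asym xy) xy /= => J.
have B : forall y x, E r s t y x -> before v y x.
  by move=> y' x' /andP [l /orP [b|b]]; [exact: Hs | exact: Ht].
case: (J_below B J) => // E1; by rewrite E1 ltv_irr in xy.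
Qed.

Lemma wle_antisym r n (s t : 'S_n) : wle r s t -> wle r t s -> s = t.
Proof.
move=> H1 H2; apply: before_inj => x y.
case: (eqVneq x y) => [->|N]; first by rewrite !before_irr.
have key : forall a b, ltv r a b -> before s b a = before t b a.
  by move=> a b ab; apply/idP/idP; [exact: H1 | exact: H2].
case/orP: (ltv_total r N) => H; first by rewrite (before_neg s N) (before_neg t N) key.
exact: key.
Qed.

Lemma inv_swap n (s s' : 'S_n) (i i' : 'I_n) : (forall j, s' j = s (tperm i i' j)) ->
  forall x, (s'^-1)%g x = tperm i i' ((s^-1)%g x).
Proof. by move=> H x; apply: (@perm_inj _ s'); rewrite permKV H tpermK permKV. Qed.

Lemma ord_neq' n (x y : 'I_n) : x <> y -> (x : nat) <> y.
Proof. by move=> H E; apply: H; apply: val_inj. Qed.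

Lemma tperm_lt n (i i' p q : 'I_n) : val i' = (val i).+1 ->
  ~~ ((p \in [:: i; i']) && (q \in [:: i; i'])) ->
  (tperm i i' p < tperm i i' q) = (p < q).
Proof.
move=> Hi; have {}Hi : nat_of_ord i' = (nat_of_ord i).+1 := Hi; rewrite !inE.
case: tpermP => [->|->|/ord_neq' pi /ord_neq' pi'];
case: tpermP => [->|->|/ord_neq' qi /ord_neq' qi']; rewrite ?eqxx ?orbT //= => _;
apply/idP/idP; lia.
Qed.

Lemma mem_inv n (s : 'S_n) (i i' x : 'I_n) :
  ((s^-1)%g x \in [:: i; i']) = (x \in [:: s i; s i']).
Proof.
rewrite !inE; congr (_ || _); apply/eqP/eqP => [<-|->]; by rewrite ?permKV ?permK.
Qed.

Lemma before_swap n (s s' : 'S_n) (i i' x y : 'I_n) : val i' = (val i).+1 ->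
  (forall j, s' j = s (tperm i i' j)) ->
  ~~ ((x \in [:: s i; s i']) && (y \in [:: s i; s i'])) -> before s' x y = before s x y.
Proof.
move=> Hi Hs H; rewrite /before !(inv_swap Hs) tperm_lt //.
by rewrite !mem_inv.
Qed.

Lemma before_swap1 n (s s' : 'S_n) (i i' : 'I_n) : val i' = (val i).+1 ->
  (forall j, s' j = s (tperm i i' j)) ->
  before s' (s i) (s i') = false /\ before s' (s i') (s i) = true.
Proof.
move=> Hi Hs; have {}Hi : nat_of_ord i' = (nat_of_ord i).+1 := Hi.
rewrite /before !(inv_swap Hs) !permK tpermL tpermR Hi.
by rewrite ltnSn; split => //; apply/negbTE; rewrite -leqNgt.
Qed.

Lemma pair_cases (T : eqType) (a c x y : T) : (x \in [:: a; c]) && (y \in [:: a; c]) ->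
  [\/ x = a /\ y = a, x = a /\ y = c, x = c /\ y = a | x = c /\ y = c].
Proof.
by rewrite !inE => /andP [/orP [/eqP->|/eqP->] /orP [/eqP->|/eqP->]];
  [constructor 1 | constructor 2 | constructor 3 | constructor 4].
Qed.

Definition btw n (x b y : 'I_n) := ((x < b) && (b < y)) || ((y < b) && (b < x)).
Definition side (dn : bool) n (w : 'S_n) (b z : 'I_n) := if dn then before w z b else before w b z.
Definition D n (u u' : 'S_n) := [pred p : 'I_n * 'I_n | before u p.1 p.2 != before u' p.1 p.2].

Lemma adj_dis n (u u' : 'S_n) : u != u' ->
  exists i i' : 'I_n, val i' = (val i).+1 /\ before u' (u i') (u i).
Proof.
move=> N.
case: (pickP [pred ii : 'I_n * 'I_n | (nat_of_ord ii.2 == (nat_of_ord ii.1).+1) && before u' (u ii.2) (u ii.1)])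
  => [[i i'] /andP [/eqP H1 H2]|H]; first by exists i, i'.
case/negP: N; apply/eqP; apply: before_inj => x y.
have adj : forall i i' : 'I_n, nat_of_ord i' = (nat_of_ord i).+1 -> before u' (u i) (u i').
  move=> i i' E; have := H (i, i'); rewrite /= E eqxx /= => nb.
  have Nii : u i != u i'.
    by apply/eqP => /perm_inj E2; move: E; rewrite E2; lia.
  by case/orP: (before_total u' Nii) => // B; rewrite B in nb.
have far : forall d (p q : 'I_n), nat_of_ord q = p + d.+1 -> before u' (u p) (u q).
  elim=> [|d IH] p q E; first by apply: adj; lia.
  have Hm : p + d.+1 < n by have := ltn_ord q; lia.
  apply: (before_trans (IH p (Ordinal Hm) _) (adj (Ordinal Hm) q _)) => /=; lia.
have imp : forall x y, before u x y -> before u' x y.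
  move=> a c Hac; have := far ((u^-1)%g c - (u^-1)%g a).-1 ((u^-1)%g a) ((u^-1)%g c).
  rewrite !permKV; apply; move: Hac; rewrite /before; lia.
case: (eqVneq x y) => [->|Nxy]; first by rewrite !before_irr.
case/orP: (before_total u Nxy) => B; first by rewrite B imp.
by rewrite (before_asym B) (before_asym (imp _ _ B)).
Qed.

Lemma btw_neq n (x b y : 'I_n) : btw x b y -> (b != x) && (b != y).
Proof.
rewrite /btw => H; apply/andP; split; apply/eqP => E1; move: H; rewrite E1; lia.
Qed.
Lemma btw_mm n (x b y : 'I_n) : btw x b y -> minn x y < b < maxn x y.
Proof. rewrite /btw; lia. Qed.

Lemma lemA n (delta : 'I_n -> deco) (dn : bool) (b : 'I_n) :
  (if dn then down_dec (delta b) else up_dec (delta b)) ->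
  forall u u' : 'S_n,
  (forall x y, before u x y != before u' x y ->
     [&& btw x b y, side dn u b x, side dn u b y, side dn u' b x & side dn u' b y]) ->
  permutree_cong delta u u'.
Proof.
move=> Hd u u'.
have [k Hk] : exists k, #|D u u'| <= k by exists #|D u u'|.
elim: k u Hk => [|k IH] u Hk H.
  have -> : u = u'; last exact: rst_refl.
  apply: before_inj => x y.
  move: Hk; rewrite leqn0 => /eqP Hk.
  by have := card0_eq Hk (x, y); rewrite !inE /= => /negbT; rewrite negbK => /eqP.
case: (eqVneq u u') => [->|N]; first exact: rst_refl.
have [i [i' [Hi Bc]]] := adj_dis N.
have Hi' : nat_of_ord i' = (nat_of_ord i).+1 := Hi.
set a := u i; set c := u i'.
have Dac : before u a c != before u' a c.
  by rewrite (before_asym Bc) /before /a /c !permK Hi' ltnSn.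
have /and5P [Hbtw Sua Suc Su'a Su'c] := H a c Dac.
pose u1 := (tperm i i' * u)%g.
have Hu1 : forall j, u1 j = u (tperm i i' j) by move=> j; rewrite permM.
have [B1 B2] := before_swap1 Hi Hu1.
have same : forall x y, before u1 x y != before u' x y -> before u1 x y = before u x y.
  move=> x y; case: (boolP ((x \in [:: a; c]) && (y \in [:: a; c]))) => Hxy.
    case: (pair_cases Hxy) => [[-> ->]|[-> ->]|[-> ->]|[-> ->]];
      rewrite ?before_irr ?eqxx //.
      by rewrite B1 (before_asym Bc) eqxx.
    by rewrite B2 Bc eqxx.
  by move=> _; rewrite (before_swap Hi Hu1).
have bnot : b \notin [:: a; c].
  by rewrite !inE negb_or; have := btw_neq Hbtw; rewrite ![b == _]eq_sym.
have sides : forall z, side dn u1 b z = side dn u b z.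
  move=> z; rewrite /side; case: (dn) => /=;
  by rewrite (before_swap Hi Hu1) // -/a -/c (negbTE bnot) ?andbF.
apply: (rst_trans _ _ _ u1).
  apply: rst_step; exists i, i'; split => //; split => //.
  exists b; split.
    exact: btw_mm Hbtw.
  move: Hd Sua Suc; rewrite /side; case: (dn) => Hd Sua Suc.
    by left; split => //; move: Suc; rewrite /before /c permK.
  by right; split => //; move: Sua; rewrite /before /a permK.
apply: IH.
  have : #|D u1 u'| < #|D u u'|.
    apply: proper_card; apply/properP; split.
      apply/subsetP => [[x y]]; rewrite !inE /= => Hxy.
      by rewrite -(same _ _ Hxy).
    by exists (a, c); rewrite !inE /= ?Dac // B1 (before_asym Bc).
  by move=> H1; rewrite -ltnS; exact: leq_trans H1 Hk.
move=> x y Hxy; rewrite !sides.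
by have := H x y; rewrite -(same _ _ Hxy); apply.
Qed.

Lemma precg_lt r n (e : rel 'I_n) x y : ltv r x y -> precg r e x y = ~~ connect e y x.
Proof. by move=> H; rewrite /precg H (ltv_asym H) /= orbF. Qed.
Lemma precg_gt r n (e : rel 'I_n) x y : ltv r y x -> precg r e x y = connect e x y.
Proof. by move=> H; rewrite /precg H (ltv_asym H). Qed.

Lemma ltv_btw r n (q b p : 'I_n) : ltv r q b -> ltv r b p -> btw q b p.
Proof. rewrite /ltv /btw; case: r; lia. Qed.

Lemma key r n (delta : 'I_n -> deco) (s s' t u u' : 'S_n) (i i' b : 'I_n) :
  val i' = (val i).+1 ->
  (forall j, s' j = s (tperm i i' j)) ->
  ltv r (s i) (s i') -> ltv r (s i) b -> ltv r b (s i') ->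
  ((down_dec (delta b) /\ i' < (s^-1)%g b) \/ (up_dec (delta b) /\ (s^-1)%g b < i)) ->
  (forall x y, before u x y = prec r s t x y) ->
  (forall x y, before u' x y = prec r s' t x y) ->
  permutree_cong delta u u'.
Proof.
move=> Hi Hs' ac ab bc Hdec Hu Hu'.
have Hi' : nat_of_ord i' = (nat_of_ord i).+1 := Hi.
have [B1 B2] := before_swap1 Hi Hs'.
have Bsw := before_swap Hi Hs'.
have pa : (s^-1)%g (s i) = i by rewrite permK.
have pc : (s^-1)%g (s i') = i' by rewrite permK.
set a := s i in ac ab B1 B2 Bsw pa.
set c := s i' in ac bc B1 B2 Bsw pc.
pose Es := E r s t; pose Es' := E r s' t.
have EE' : forall y x, Es y x -> Es' y x.
  move=> y x /andP [xy /orP [bs|bt]]; rewrite /Es' /E xy ?bt ?orbT //=.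
  case: (boolP ((y \in [:: a; c]) && (x \in [:: a; c]))) => Hyx; last by rewrite Bsw // bs.
  case: (pair_cases Hyx) => [[-> ->]|[-> ->]|[-> ->]|[-> ->]] in xy bs *;
    rewrite ?ltv_irr ?(ltv_asym ac) // in xy.
  by move: bs; rewrite /before pa pc Hi' ltnNge leqnSn.
have E'E : forall y x, Es' y x -> Es y x \/ (y = c /\ x = a).
  move=> y x /andP [xy /orP [bs|bt]]; last by left; rewrite /Es /E xy bt orbT.
  case: (boolP ((y \in [:: a; c]) && (x \in [:: a; c]))) => Hyx; last first.
    by left; rewrite /Es /E xy -Bsw // bs.
  case: (pair_cases Hyx) => [[-> ->]|[-> ->]|[-> ->]|[-> ->]] in xy bs *;
    rewrite ?ltv_irr ?(ltv_asym ac) // in xy; by right.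
have JJ' : forall y x, connect Es y x -> connect Es' y x.
  by move=> y x; apply: connect_sub => y1 x1 H; apply: connect1; exact: EE'.
have J'dec : forall y x, connect Es' y x -> connect Es y x \/ (connect Es y c /\ connect Es' a x).
  move=> y x /connectP [p]; elim: p y => [|w p IH] y /=.
    by move=> _ ->; left.
  case/andP=> eyw pw Ex.
  case: (E'E _ _ eyw) => [Hyw|[Ey Ew]].
    case: (IH w pw Ex) => [H|[H1 H2]].
      by left; exact: connect_trans (connect1 Hyw) H.
    by right; split => //; exact: connect_trans (connect1 Hyw) H1.
  by right; rewrite Ey; split => //; apply/connectP; exists p; rewrite -Ew.
have Esd : desc r Es by exact: E_desc.
have J'a : forall x, connect Es' a x -> connect Es a x.
  move=> x /J'dec [//|[/(J_desc Esd) [Eac|Hca] _]].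
    by rewrite Eac ltv_irr in ac.
  by rewrite (ltv_asym ac) in Hca.
have diff : forall x y, before u x y != before u' x y ->
    exists p q, [/\ ltv r q p, connect Es' p q, ~~ connect Es p q &
                   ((x = p /\ y = q) \/ (x = q /\ y = p))].
  move=> x y; rewrite Hu Hu' /prec.
  case: (eqVneq x y) => [->|Nxy]; first by rewrite !precg_irr.
  case/orP: (ltv_total r Nxy) => H.
    rewrite !precg_lt // -/Es -/Es'; case E1: (connect Es y x).
      by rewrite (JJ' _ _ E1).
    case E2: (connect Es' y x) => // _.
    by exists y, x; split => //; [rewrite E1 | right].
  rewrite !precg_gt // -/Es -/Es'; case E1: (connect Es x y).
    by rewrite (JJ' _ _ E1).
  case E2: (connect Es' x y) => // _.
  by exists x, y; split => //; [rewrite E1 | left].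
have common : forall p q, ltv r q p -> connect Es' p q -> ~~ connect Es p q ->
    [/\ connect Es p c, connect Es a q, ltv r q b & ltv r b p].
  move=> p q qp J'pq nJpq.
  case: (J'dec _ _ J'pq) => [H|[Jpc J'aq]]; first by rewrite H in nJpq.
  have Jaq := J'a _ J'aq; split => //.
    case: (J_desc Esd Jaq) => [<-|H] //; exact: ltv_trans H ab.
  case: (J_desc Esd Jpc) => [->|H] //; exact: ltv_trans bc H.
have bneqc : ~~ connect Es b c.
  by apply/negP => /(J_desc Esd) [Ebc|H]; [rewrite Ebc ltv_irr in bc | rewrite (ltv_asym bc) in H].
have bneqa : ~~ connect Es a b.
  by apply/negP => /(J_desc Esd) [Eab|H]; [rewrite Eab ltv_irr in ab | rewrite (ltv_asym ab) in H].
have fin : forall dn, (forall p q, ltv r q p -> connect Es' p q -> ~~ connect Es p q ->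
      [&& side dn u b p, side dn u b q, side dn u' b p & side dn u' b q]) ->
    forall x y, before u x y != before u' x y ->
      [&& btw x b y, side dn u b x, side dn u b y, side dn u' b x & side dn u' b y].
  move=> dn F x y /diff [p [q [qp J'pq nJpq Exy]]].
  have [_ _ qb bp] := common _ _ qp J'pq nJpq.
  have /and4P [S1 S2 S3 S4] := F _ _ qp J'pq nJpq.
  have Hb := ltv_btw qb bp.
  case: Exy => [[-> ->]|[-> ->]]; rewrite S1 S2 S3 S4 !andbT //.
  by move: Hb; rewrite /btw orbC.
case: Hdec => [[Hd Hp]|[Hd Hp]].
- apply: (@lemA n delta true b Hd); apply: fin => p q qp J'pq nJpq.
  have [Jpc Jaq qb bp] := common _ _ qp J'pq nJpq.
  have Ecb : Es c b by rewrite /Es /E bc /before pc Hp.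
  have Jpb : connect Es p b := connect_trans Jpc (connect1 Ecb).
  have nJbq : ~~ connect Es b q.
    by apply/negP => Jbq; rewrite (connect_trans Jpb Jbq) in nJpq.
  rewrite /side !Hu !Hu' /prec (precg_gt _ bp) (precg_lt _ qb) (precg_gt _ bp) (precg_lt _ qb).
  rewrite -/Es -/Es' Jpb nJbq JJ' //=.
  apply/negP => /J'dec [H|[H _]]; first by rewrite H in nJbq.
  by rewrite H in bneqc.
- apply: (@lemA n delta false b Hd); apply: fin => p q qp J'pq nJpq.
  have [Jpc Jaq qb bp] := common _ _ qp J'pq nJpq.
  have Eba : Es b a by rewrite /Es /E ab /before pa Hp.
  have Jbq : connect Es b q := connect_trans (connect1 Eba) Jaq.
  have nJpb : ~~ connect Es p b.
    by apply/negP => Jpb; rewrite (connect_trans Jpb Jbq) in nJpq.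
  rewrite /side !Hu !Hu' /prec (precg_lt _ bp) (precg_gt _ qb) (precg_lt _ bp) (precg_gt _ qb).
  rewrite -/Es -/Es' Jbq nJpb (JJ' _ _ Jbq) /= ?andbT.
  apply/negP => /J'dec [H|[_ H]]; first by rewrite H in nJpb.
  by rewrite (J'a _ H) in bneqa.
Qed.

Lemma join_exists_b r n (s t : 'S_n) :
  exists u : 'S_n, [forall x, forall y, before u x y == prec r s t x y].
Proof.
have [u H] := join_exists r s t; exists u.
by apply/forallP => x; apply/forallP => y; rewrite H.
Qed.

Definition joinf r n (s t : 'S_n) : 'S_n := xchoose (join_exists_b r s t).

Lemma joinfP r n (s t : 'S_n) x y : before (joinf r s t) x y = prec r s t x y.
Proof. by have := xchooseP (join_exists_b r s t); move/forallP/(_ x)/forallP/(_ y)/eqP. Qed.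

Lemma joinf_sym r n (s t : 'S_n) : joinf r s t = joinf r t s.
Proof.
apply: before_inj => x y; rewrite !joinfP /prec /precg.
have EE : E r s t =2 E r t s by move=> a b; rewrite /E orbC.
by rewrite !(eq_connect EE).
Qed.

Lemma ltv_of_mm r n (a b c : 'I_n) : ltv r a c -> minn a c < b < maxn a c ->
  ltv r a b && ltv r b c.
Proof. rewrite /ltv; case: r; lia. Qed.

Lemma mm_neq n (a b c : 'I_n) : minn a c < b < maxn a c -> (b != a) && (b != c).
Proof.
move=> H; apply/andP; split; apply/eqP => E1; move: H; rewrite E1; lia.
Qed.

Lemma cong_step r n (delta : 'I_n -> deco) (s s' t : 'S_n) :
  permutree_step delta s s' -> permutree_cong delta (joinf r s t) (joinf r s' t).
Proof.
case=> i [i' [Hi [Hs [b [Hb Hdec]]]]].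
have Hi' : nat_of_ord i' = (nat_of_ord i).+1 := Hi.
have Nii : s i != s i'.
  apply/eqP => /perm_inj E1; move: Hi'; rewrite E1; clear; lia.
case/orP: (ltv_total r Nii) => ac.
  have /andP [ab bc] := ltv_of_mm ac Hb.
  exact: (key Hi Hs ac ab bc Hdec (joinfP r s t) (joinfP r s' t)).
have Hs2 : forall j, s j = s' (tperm i i' j) by move=> j; rewrite Hs tpermK.
have s'i : s' i = s i' by rewrite Hs tpermL.
have s'i' : s' i' = s i by rewrite Hs tpermR.
have Hb' : minn (s' i) (s' i') < b < maxn (s' i) (s' i') by rewrite s'i s'i' minnC maxnC.
have ac' : ltv r (s' i) (s' i') by rewrite s'i s'i'.
have /andP [ab bc] := ltv_of_mm ac' Hb'.
have pb : (s'^-1)%g b = (s^-1)%g b.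
  rewrite (inv_swap Hs) tpermD //.
    by apply/eqP => E1; have := mm_neq Hb; rewrite E1 permKV eqxx.
  by apply/eqP => E1; have := mm_neq Hb; rewrite E1 permKV eqxx andbF.
apply: rst_sym.
apply: (key Hi Hs2 ac' ab bc _ (joinfP r s' t) (joinfP r s t)).
by rewrite pb.
Qed.

Lemma cong_join r n (delta : 'I_n -> deco) (s s' t : 'S_n) :
  permutree_cong delta s s' -> permutree_cong delta (joinf r s t) (joinf r s' t).
Proof.
elim => [x y H|x|x y _ IH|x y z _ IH1 _ IH2].
- exact: cong_step.
- exact: rst_refl.
- exact: rst_sym.
- exact: rst_trans IH1 IH2.
Qed.

Lemma cong_join2 r n (delta : 'I_n -> deco) (s s' t t' : 'S_n) :
  permutree_cong delta s s' -> permutree_cong delta t t' ->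
  permutree_cong delta (joinf r s t) (joinf r s' t').
Proof.
move=> H1 H2; apply: (rst_trans _ _ _ (joinf r s' t)); first exact: cong_join.
rewrite (joinf_sym r s' t) (joinf_sym r s' t'); exact: cong_join.
Qed.

Lemma weak_le_wle n (s t : 'S_n) : weak_le s t <-> wle false s t.
Proof.
split.
  move/forallP => H x y; rewrite /ltv /before => xy bs.
  by move: (H x) => /forallP /(_ y) /implyP; apply; rewrite xy bs.
move=> H; apply/forallP => a; apply/forallP => b; apply/implyP => /andP [ab bs].
exact: H.
Qed.

Lemma weak_le_wle_rev n (s t : 'S_n) : weak_le t s <-> wle true s t.
Proof.
split.
  move/forallP => H x y yx bs.
  have Nxy : x != y by apply/eqP => E1; move: yx; rewrite /ltv E1 ltnn.
  case/orP: (before_total t Nxy) => // btx.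
  move: (H y) => /forallP /(_ x) /implyP Himp.
  have : before s x y by apply: Himp; apply/andP; split.
  by rewrite (before_asym bs).
move=> H; apply/forallP => a; apply/forallP => b; apply/implyP => /andP [ab bt].
have Nab : b != a by apply/eqP => E1; move: ab; rewrite E1 ltnn.
case/orP: (before_total s Nab) => // bsab.
have := H b a ab bsab; rewrite (before_asym bt) //.
Qed.

Lemma wjoinE n (s t : 'S_n) : wjoin s t = joinf false s t.
Proof.
have [H1 H2 H3] := join_spec (joinfP false s t).
have Hj : is_join s t (joinf false s t).
  apply/and3P; split; [exact/weak_le_wle | exact/weak_le_wle |].
  apply/forallP => v; apply/implyP => /andP [a b]; apply/weak_le_wle.
  by apply: H3; apply/weak_le_wle.
rewrite /wjoin; case: pickP => [j Hjj|H]; last by rewrite H in Hj.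
case/and3P: Hjj => j1 j2 /forallP /(_ (joinf false s t)) /implyP j3.
apply: (@wle_antisym false).
  by apply/weak_le_wle; apply: j3; case/and3P: Hj => -> -> _.
by apply: H3; apply/weak_le_wle.
Qed.

Lemma wmeetE n (s t : 'S_n) : wmeet s t = joinf true s t.
Proof.
have [H1 H2 H3] := join_spec (joinfP true s t).
have Hj : is_meet s t (joinf true s t).
  apply/and3P; split; [exact/weak_le_wle_rev | exact/weak_le_wle_rev |].
  apply/forallP => v; apply/implyP => /andP [a b]; apply/weak_le_wle_rev.
  by apply: H3; apply/weak_le_wle_rev.
rewrite /wmeet; case: pickP => [j Hjj|H]; last by rewrite H in Hj.
case/and3P: Hjj => j1 j2 /forallP /(_ (joinf true s t)) /implyP j3.
apply: (@wle_antisym true).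
  by apply/weak_le_wle_rev; apply: j3; case/and3P: Hj => -> -> _.
by apply: H3; apply/weak_le_wle_rev.
Qed.

Theorem proposition2p13 (n : nat) (delta : 'I_n -> deco) (s s' t t' : 'S_n) :
  1 <= n ->
  permutree_cong delta s s' -> permutree_cong delta t t' ->
  permutree_cong delta (wmeet s t) (wmeet s' t') /\
  permutree_cong delta (wjoin s t) (wjoin s' t').
Proof.
move=> _ Hs Ht; rewrite !wmeetE !wjoinE; split; exact: cong_join2.
Qed.
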